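(* Let $W\in\mathscr{W}$, $m\ge1$ an integer, $k>0$, $b\in(0,1)$, and let $\bar r>0$ satisfy $\Omega(\bar r)=b$. Assume $J(\bar r)<\frac{m^2}{4k^2}$ and let $d_\pm=\frac12\pm\bigl(\frac14-\frac{k^2}{m^2}J(\bar r)\bigr)^{1/2}$ (so $0<d_-<\frac12<d_+<1$). Define $U_\pm(r)=(b-\Omega(r))^{d_\pm}$ for $r>\bar r$. Then there exists $\gamma>0$ such that $\mathscr{L}(U_\pm)\ge\gamma U_\pm'>0$ on $(\bar r,\infty)$, where $\mathscr{L}U=-\partial_r\bigl(\mathcal{A}(r)\partial_r^*U\bigr)+\mathcal{B}_b(r)U$.
   Context: $\Omega(r)=r^{-2}\int_0^rW(s)s\,ds$, $\Phi=2\Omega W$, $J=\Phi/(\Omega')^2$. Class $\mathscr{W}$: $\mathcal{C}^1$ $W:[0,\infty)\to(0,\infty)$ with $W'(0)=0$, $W'<0$ on $(0,\infty)$, $\int_0^\infty Wr\,dr<\infty$, $J'<0$ on $(0,\infty)$, $rJ'(r)\to0$ as $r\to\infty$, $W(0)=2$. $\partial_r^*=\partial_r+\frac1r$, $\mathcal{A}(r)=\frac{r^2}{m^2+k^2r^2}$, $\mathcal{B}_b(r)=1-\frac{k^2}{m^2}\frac{\mathcal{A}(r)\Phi(r)}{(\Omega(r)-b)^2}+\frac{r}{\Omega(r)-b}\partial_r\Bigl(\frac{W(r)}{m^2+k^2r^2}\Bigr)$. *)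

(* Defs.v *)
From Stdlib Require Import Reals Lra ClassicalEpsilon.
Open Scope R_scope.

(* Derivative of f at x: the unique l with derivable_pt_lim f x l, if it
   exists (default 0 otherwise; statements below assert existence where needed). *)
Definition Deriv (f : R -> R) (x : R) : R :=
  match excluded_middle_informative (exists l, derivable_pt_lim f x l) with
  | left H => proj1_sig (constructive_indefinite_description _ H)
  | right _ => 0
  end.

(* Riemann integral of f over [a,b] (0 if f is not Riemann integrable). *)
Definition RInt (f : R -> R) (a b : R) : R :=
  match excluded_middle_informative (exists pr : Riemann_integrable f a b, True) with
  | left H => RiemannInt (proj1_sig (constructive_indefinite_description _ H))
  | right _ => 0
  end.

Definition Omega (W : R -> R) (r : R) : R :=
  / (r ^ 2) * RInt (fun s => W s * s) 0 r.

Definition Phi (W : R -> R) (r : R) : R := 2 * Omega W r * W r.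

Definition J (W : R -> R) (r : R) : R :=
  Phi W r / (Deriv (Omega W) r) ^ 2.

(* The class \mathscr{W}; W is only relevant on [0, oo). *)
Definition classW (W : R -> R) : Prop :=
  (* C^1 on [0,oo), with derivative Wd (one-sided at 0) *)
  (exists Wd : R -> R,
      (forall r, 0 < r -> derivable_pt_lim W r (Wd r)) /\
      (forall eps, 0 < eps -> exists delta, 0 < delta /\
          forall h, 0 < h < delta -> Rabs ((W h - W 0) / h - Wd 0) < eps) /\
      (forall r, 0 <= r -> limit1_in Wd (fun x => 0 <= x) (Wd r) r) /\
      Wd 0 = 0 /\
      (forall r, 0 < r -> Wd r < 0)) /\
  (forall r, 0 <= r -> 0 < W r) /\
  (* \int_0^oo W r dr < oo (W > 0, so: bounded partial integrals) *)
  (exists M, forall R0, 0 < R0 -> RInt (fun s => W s * s) 0 R0 <= M) /\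
  (forall r, 0 < r -> Deriv (J W) r < 0) /\
  (forall eps, 0 < eps -> exists R0, forall r, R0 < r -> Rabs (r * Deriv (J W) r) < eps) /\
  W 0 = 2.

Definition Acoef (m k r : R) : R := r ^ 2 / (m ^ 2 + k ^ 2 * r ^ 2).

Definition Bcoef (W : R -> R) (m k b r : R) : R :=
  1 - k ^ 2 / m ^ 2 * (Acoef m k r * Phi W r / (Omega W r - b) ^ 2)
    + r / (Omega W r - b) * Deriv (fun s => W s / (m ^ 2 + k ^ 2 * s ^ 2)) r.

(* d_pm = 1/2 +/- (1/4 - k^2/m^2 J(rbar))^{1/2}; sgn = 1 for d_+, -1 for d_- *)
Definition dpm (W : R -> R) (m k rbar sgn : R) : R :=
  / 2 + sgn * sqrt (/ 4 - k ^ 2 / m ^ 2 * J W rbar).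

Definition Ufun (W : R -> R) (b d : R) (r : R) : R := Rpower (b - Omega W r) d.

(* the flux A(r) d*_r U = A(r) (U' + U/r) *)
Definition flux (m k : R) (U : R -> R) (r : R) : R :=
  Acoef m k r * (Deriv U r + U r / r).

Definition Lop (W : R -> R) (m k b : R) (U : R -> R) (r : R) : R :=
  - Deriv (flux m k U) r + Bcoef W m k b r * U r.

(* Main.v *)
Require Import Defs.
From Stdlib Require Import Reals Lra Field ClassicalEpsilon.
From Coquelicot Require Import Coquelicot.
Open Scope R_scope.

Lemma Deriv_eq f x l : derivable_pt_lim f x l -> Deriv f x = l.
Proof.
  intro H. unfold Deriv. destruct excluded_middle_informative as [e|n].
  - destruct constructive_indefinite_description as [l' H']; simpl.
    eapply uniqueness_limite; eauto.
  - exfalso; apply n; eauto.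
Qed.

Lemma Deriv_spec f x : Deriv f x <> 0 -> derivable_pt_lim f x (Deriv f x).
Proof.
  unfold Deriv. destruct excluded_middle_informative as [e|n].
  - destruct constructive_indefinite_description as [l' H']; simpl; auto.
  - intro H; now elim H.
Qed.

Lemma loc_gt x a : a < x -> locally x (fun y => a < y).
Proof.
  intro H. assert (He : 0 < x - a) by lra.
  exists (mkposreal _ He). intros y Hy. cbv [ball] in Hy. simpl in Hy.
  unfold AbsRing_ball, abs, minus, plus, opp in Hy; simpl in Hy.
  apply Rabs_def2 in Hy. lra.
Qed.

Definition Wt (W : R -> R) s := W (Rmax 0 s).

Lemma Wt_cont W Wd :
  (forall r, 0 < r -> derivable_pt_lim W r (Wd r)) ->
  (forall eps, 0 < eps -> exists delta, 0 < delta /\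
          forall h, 0 < h < delta -> Rabs ((W h - W 0) / h - Wd 0) < eps) ->
  Wd 0 = 0 ->
  forall x, continuity_pt (Wt W) x.
Proof.
  intros HWd Hq HWd0 x.
  destruct (Rlt_or_le 0 x) as [Hx|Hx].
  - apply continuity_pt_filterlim. apply (ex_derive_continuous (Wt W)).
    exists (Wd x). apply is_derive_ext_loc with W.
    + generalize (loc_gt x 0 Hx). apply filter_imp. intros y Hy.
      unfold Wt. rewrite Rmax_right; lra.
    + apply is_derive_Reals. auto.
  - intros eps Heps.
    destruct (Hq 1 Rlt_0_1) as [del [Hdel Hd]].
    exists (Rmin del eps). split. apply Rmin_pos; lra.
    intros y [_ Hy]. unfold R_dist in *; simpl in *. unfold R_dist in *.
    unfold Wt. rewrite (Rmax_left 0 x) by lra.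
    destruct (Rlt_or_le 0 y) as [Hy0|Hy0].
    + rewrite Rmax_right by lra.
      assert (Hyx : y < Rmin del eps).
      { apply Rabs_def2 in Hy. lra. }
      assert (Hy1 : y < del) by (eapply Rlt_le_trans; [exact Hyx| apply Rmin_l]).
      assert (Hy2 : y < eps) by (eapply Rlt_le_trans; [exact Hyx| apply Rmin_r]).
      specialize (Hd y (conj Hy0 Hy1)). rewrite HWd0, Rminus_0_r in Hd.
      unfold Rdiv in Hd. rewrite Rabs_mult, Rabs_inv, (Rabs_right y) in Hd by lra.
      apply (Rmult_lt_compat_r y) in Hd; [|lra].
      rewrite Rmult_assoc, Rinv_l, Rmult_1_r, Rmult_1_l in Hd by lra. lra.
    + rewrite Rmax_left by lra. rewrite Rminus_diag, Rabs_R0. lra.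
Qed.

Definition Ft (W : R -> R) x := RInt (fun s => Wt W s * s) 0 x.

Lemma f_cont W Wd :
  (forall r, 0 < r -> derivable_pt_lim W r (Wd r)) ->
  (forall eps, 0 < eps -> exists delta, 0 < delta /\
          forall h, 0 < h < delta -> Rabs ((W h - W 0) / h - Wd 0) < eps) ->
  Wd 0 = 0 ->
  forall x, continuous (fun s => Wt W s * s) x.
Proof.
  intros H1 H2 H3 x. apply continuity_pt_filterlim.
  apply continuity_pt_mult. apply (Wt_cont W Wd); auto. apply derivable_continuous_pt, derivable_pt_id.
Qed.

Lemma Ft_deriv W Wd :
  (forall r, 0 < r -> derivable_pt_lim W r (Wd r)) ->
  (forall eps, 0 < eps -> exists delta, 0 < delta /\
          forall h, 0 < h < delta -> Rabs ((W h - W 0) / h - Wd 0) < eps) ->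
  Wd 0 = 0 ->
  forall x, is_derive (Ft W) x (Wt W x * x).
Proof.
  intros H1 H2 H3 x. unfold Ft.
  apply (is_derive_RInt (fun s => Wt W s * s) _ 0).
  - exists (mkposreal 1 Rlt_0_1). intros y _. apply (RInt_correct (fun s => Wt W s * s) 0 y).
    apply (ex_RInt_continuous (V:=R_CompleteNormedModule)). intros; apply (f_cont W Wd); auto.
  - apply (f_cont W Wd); auto.
Qed.

Lemma RInt_eqF W Wd :
  (forall r, 0 < r -> derivable_pt_lim W r (Wd r)) ->
  (forall eps, 0 < eps -> exists delta, 0 < delta /\
          forall h, 0 < h < delta -> Rabs ((W h - W 0) / h - Wd 0) < eps) ->
  Wd 0 = 0 ->
  forall x, 0 < x -> Defs.RInt (fun s => W s * s) 0 x = Ft W x.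
Proof.
  intros H1 H2 H3 x Hx.
  assert (Hex : ex_RInt (fun s => Wt W s * s) 0 x).
  { apply (ex_RInt_continuous (V:=R_CompleteNormedModule)). intros; apply (f_cont W Wd); auto. }
  pose proof (ex_RInt_Reals_0 _ _ _ Hex) as pr.
  assert (pr' : Riemann_integrable (fun s => W s * s) 0 x).
  { apply (Riemann_integrable_ext (fun s => Wt W s * s) _ 0 x); auto.
    intros z Hz. unfold Wt. rewrite Rmin_left, Rmax_right in Hz by lra.
    rewrite Rmax_right by lra. auto. }
  unfold Defs.RInt. destruct excluded_middle_informative as [e|n].
  - destruct constructive_indefinite_description as [p Hp]; simpl.
    unfold Ft. rewrite (RInt_Reals _ _ _ pr). apply RiemannInt_ext.
    intros z Hz. unfold Wt. rewrite Rmin_left, Rmax_right in Hz by lra.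
    rewrite Rmax_right by lra. auto.
  - exfalso. apply n. exists pr'. auto.
Qed.

Lemma Omega_eq W Wd :
  (forall r, 0 < r -> derivable_pt_lim W r (Wd r)) ->
  (forall eps, 0 < eps -> exists delta, 0 < delta /\
          forall h, 0 < h < delta -> Rabs ((W h - W 0) / h - Wd 0) < eps) ->
  Wd 0 = 0 ->
  forall x, 0 < x -> Omega W x = / x^2 * Ft W x.
Proof.
  intros H1 H2 H3 x Hx. unfold Omega. rewrite (RInt_eqF W Wd); auto.
Qed.

Lemma Omega_deriv W Wd :
  (forall r, 0 < r -> derivable_pt_lim W r (Wd r)) ->
  (forall eps, 0 < eps -> exists delta, 0 < delta /\
          forall h, 0 < h < delta -> Rabs ((W h - W 0) / h - Wd 0) < eps) ->
  Wd 0 = 0 ->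
  forall x, 0 < x -> is_derive (Omega W) x ((W x - 2 * Omega W x)/x).
Proof.
  intros H1 H2 H3 x Hx.
  apply is_derive_ext_loc with (fun y => / y^2 * Ft W y).
  - generalize (loc_gt x 0 Hx). apply filter_imp. intros y Hy.
    symmetry; apply (Omega_eq W Wd); auto.
  - rewrite (Omega_eq W Wd) by auto.
    assert (HF := Ft_deriv W Wd H1 H2 H3 x).
    assert (Hinv : is_derive (fun y => / y^2) x (-2/x^3)).
    { auto_derive. nra. field. lra. }
    pose proof (is_derive_mult _ _ x _ _ Hinv HF (fun n m => Rmult_comm n m)) as Hm.
    unfold plus, mult in Hm; simpl in Hm.
    replace ((W x - 2 * (/ x ^ 2 * Ft W x)) / x) with ((-2/x^3) * Ft W x + / x^2 * (Wt W x * x)).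
    + exact Hm.
    + unfold Wt. rewrite Rmax_right by lra. field. lra.
Qed.

Lemma MVT_open f df a b : a < b ->
  (forall c, a < c < b -> derivable_pt_lim f c (df c)) ->
  (forall c, a <= c <= b -> continuity_pt f c) ->
  exists c, a < c < b /\ f b - f a = df c * (b - a).
Proof.
  intros Hab Hd Hc.
  set (pr1 := fun c (P : a < c < b) => exist (fun l => derivable_pt_lim f c l) (df c) (Hd c P)).
  set (pr2 := fun c (P : a < c < b) => derivable_pt_id c).
  destruct (MVT f id a b pr1 pr2 Hab Hc) as [c [P HP]].
  { intros; apply derivable_continuous_pt, derivable_pt_id. }
  exists c. split; auto.
  unfold pr1, pr2 in HP. simpl in HP. rewrite derive_pt_id in HP. unfold id in HP.
  lra.
Qed.

Definition Gt (W : R -> R) s := Ft W s - Wt W s * s^2/2.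

Lemma two_Omega_gt W Wd :
  (forall r, 0 < r -> derivable_pt_lim W r (Wd r)) ->
  (forall eps, 0 < eps -> exists delta, 0 < delta /\
          forall h, 0 < h < delta -> Rabs ((W h - W 0) / h - Wd 0) < eps) ->
  Wd 0 = 0 -> (forall r, 0 < r -> Wd r < 0) ->
  forall x, 0 < x -> W x < 2 * Omega W x.
Proof.
  intros H1 H2 H3 H4 x Hx.
  destruct (MVT_open (Gt W) (fun c => - Wd c * c^2/2) 0 x Hx) as [c [Hc Heq]].
  - intros c Hc. apply is_derive_Reals.
    apply is_derive_ext_loc with (fun s => Ft W s - W s * s^2/2).
    + generalize (loc_gt c 0 (proj1 Hc)). apply filter_imp. intros y Hy.
      unfold Gt, Wt. rewrite Rmax_right by lra. reflexivity.
    + assert (HF := Ft_deriv W Wd H1 H2 H3 c).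
      assert (HW : is_derive W c (Wd c)) by (apply is_derive_Reals; apply H1; lra).
      auto_derive.
      * split. exists (Wt W c * c); auto. split; auto. exists (Wd c); auto.
      * replace (Derive (fun x0 => Ft W x0) c) with (Wt W c * c) by (symmetry; apply is_derive_unique; exact HF).
        replace (Derive (fun x0 => W x0) c) with (Wd c) by (symmetry; apply is_derive_unique; exact HW).
        unfold Wt. rewrite Rmax_right by lra. field.
  - intros c _. unfold Gt. apply continuity_pt_minus.
    + apply continuity_pt_filterlim. apply (ex_derive_continuous (K:=R_AbsRing) (V:=R_NormedModule) (Ft W)).
      exists (Wt W c * c). apply (Ft_deriv W Wd); auto.
    + apply continuity_pt_mult. apply continuity_pt_mult.
      apply (Wt_cont W Wd); auto.
      apply derivable_continuous_pt. apply derivable_pt_pow.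
      apply continuity_pt_const. intros u v; reflexivity.
  - assert (HG0 : Gt W 0 = 0).
    { unfold Gt, Ft. rewrite RInt_point. unfold zero; simpl. change (R0 - Wt W 0 * (0 * (0 * 1)) / 2 = 0). field. }
    rewrite HG0 in Heq.
    assert (Hd : 0 < - Wd c * c^2/2).
    { assert (Wd c < 0) by (apply H4; lra). assert (0 < c^2) by (apply pow_lt; lra). nra. }
    assert (HG : 0 < Gt W x) by nra.
    rewrite (Omega_eq W Wd) by auto. unfold Gt, Wt in HG. rewrite Rmax_right in HG by lra.
    assert (0 < x^2) by (apply pow_lt; lra).
    apply (Rmult_lt_reg_r (x^2)); auto.
    replace (2 * (/ x ^ 2 * Ft W x) * x ^ 2) with (2 * Ft W x) by (field; lra). lra.
Qed.

Definition fluxd (r O w wd u d k M b : R) :=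
  let D := M^2 + k^2*r^2 in
  let Op := (w - 2*O)/r in
  let A := r^2/D in
  let Ap := 2*r*M^2/D^2 in
  let psi := (2*O - w)/(r*(b-O)) in
  let psip := ((2*Op - wd)*r*(b-O) - (2*O-w)*((b-O) - r*Op))/(r*(b-O))^2 in
  Ap*u*(d*psi + /r) + A*(u*d*psi)*(d*psi + /r) + A*u*(d*psip - /r^2).


Lemma U_deriv W Wd b d y :
  (forall r, 0 < r -> derivable_pt_lim W r (Wd r)) ->
  (forall eps, 0 < eps -> exists delta, 0 < delta /\
          forall h, 0 < h < delta -> Rabs ((W h - W 0) / h - Wd 0) < eps) ->
  Wd 0 = 0 -> 0 < y -> Omega W y < b ->
  is_derive (Ufun W b d) y (Ufun W b d y * (d * ((2*Omega W y - W y)/(y*(b - Omega W y))))).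
Proof.
  intros H1 H2 H3 Hy Hb.
  assert (HO := Omega_deriv W Wd H1 H2 H3 y Hy).
  unfold Ufun, Rpower. auto_derive.
  - split. exists ((W y - 2 * Omega W y)/y); auto. split; auto. lra.
  - replace (Derive (fun x => Omega W x) y) with ((W y - 2 * Omega W y)/y)
      by (symmetry; apply is_derive_unique; exact HO).
    replace (b + - Omega W y) with (b - Omega W y) by ring.
    field. lra.
Qed.

Lemma flux_deriv W Wd b d k M rbar y :
  (forall r, 0 < r -> derivable_pt_lim W r (Wd r)) ->
  (forall eps, 0 < eps -> exists delta, 0 < delta /\
          forall h, 0 < h < delta -> Rabs ((W h - W 0) / h - Wd 0) < eps) ->
  Wd 0 = 0 -> 0 < rbar -> 0 < M -> 0 < k ->
  (forall z, rbar < z -> Omega W z < b) ->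
  (forall z, rbar < z -> W z < 2 * Omega W z) ->
  rbar < y ->
  is_derive (flux M k (Ufun W b d)) y
    (fluxd y (Omega W y) (W y) (Wd y) (Ufun W b d y) d k M b).
Proof.
  intros H1 H2 H3 Hr HM Hk Hb H2O Hy.
  apply is_derive_ext_loc with (fun z => Acoef M k z *
     (Ufun W b d z * (d * ((2*Omega W z - W z)/(z*(b - Omega W z)))) + Ufun W b d z / z)).
  - generalize (loc_gt y rbar Hy). apply filter_imp. intros z Hz.
    unfold flux. f_equal. f_equal. symmetry. apply Deriv_eq.
    apply is_derive_Reals. apply (U_deriv W Wd); auto; lra.
  - assert (HO := Omega_deriv W Wd H1 H2 H3 y ltac:(lra)).
    assert (HW : is_derive W y (Wd y)) by (apply is_derive_Reals; apply H1; lra).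
    assert (Hby := Hb y Hy). assert (Hwy := H2O y Hy).
    unfold Acoef, Ufun, Rpower. auto_derive.
    + repeat split; try (exists ((W y - 2 * Omega W y)/y); exact HO);
        try (exists (Wd y); exact HW); try lra; try nra.
    + replace (Derive (fun x => Omega W x) y) with ((W y - 2 * Omega W y)/y)
        by (symmetry; apply is_derive_unique; exact HO).
      replace (Derive (fun x => W x) y) with (Wd y)
        by (symmetry; apply is_derive_unique; exact HW).
      replace (b + - Omega W y) with (b - Omega W y) by ring.
      unfold fluxd. field. repeat split; try lra. assert (0 < M^2 + (k*y)^2) by (apply Rplus_lt_le_0_compat; [apply pow_lt; lra| apply pow2_ge_0]). lra.
Qed.

Lemma ineq (r O w wd d k M b Jy Jb R0 g : R) :
  0 < r -> 1 <= M -> 0 < k -> 0 < b - O -> 0 < 2*O - w -> 0 < w -> wd < 0 ->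
  0 < d < 1 -> d*(1-d) = k^2/M^2*Jb -> Jy <= Jb -> 0 < g ->
  (r <= R0 -> g <= 2*k^2*r^3/(M^2 + k^2*r^2)^2) ->
  (R0 <= r -> g*(2*O - w) <= k^2*r^3*(b-O)/(M^2 + k^2*r^2)) ->
  let D := M^2 + k^2*r^2 in
  let A := r^2/D in
  let psi := (2*O - w)/(r*(b-O)) in
  g * (d * psi) <=
  A*(d*(1-d) - k^2/M^2*Jy)*psi^2 + 2*d*k^2*r^3*psi/D^2 + r*(d-1)*wd/(D*(b-O))
         + ((k^2*r^2 - M^2)/D^2 + 1) + 2*k^2*r^2*w/(D^2*(b-O)).
Proof.
  intros Hr HM Hk HbO HO Hw Hwd Hd Hdd HJ Hg Hc1 Hc2 D A psi.
  assert (HD : 0 < D) by (unfold D; nra).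
  assert (HM2 : 1 <= M^2) by nra.
  assert (HDM : M^2 <= D) by (unfold D; nra).
  assert (Hpsi : 0 < psi) by (unfold psi; apply Rdiv_lt_0_compat; nra).
  assert (T1 : 0 <= A*(d*(1-d) - k^2/M^2*Jy)*psi^2).
  { rewrite Hdd. replace (k^2/M^2*Jb - k^2/M^2*Jy) with (k^2/M^2*(Jb - Jy)) by ring.
    apply Rmult_le_pos; [|nra]. apply Rmult_le_pos.
    unfold A; apply Rlt_le, Rdiv_lt_0_compat; nra.
    apply Rmult_le_pos; [|lra]. apply Rlt_le, Rdiv_lt_0_compat; nra. }
  assert (T3 : 0 <= r*(d-1)*wd/(D*(b-O))).
  { apply Rlt_le, Rdiv_lt_0_compat; [replace (r*(d-1)*wd) with (r*((1-d)*(-wd))) by ring; apply Rmult_lt_0_compat; [lra| apply Rmult_lt_0_compat; lra] | apply Rmult_lt_0_compat; lra]. }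
  assert (HD2 : 0 < D^2) by (apply pow_lt; lra).
  assert (Hkr : 0 < k^2*r^2) by (apply Rmult_lt_0_compat; apply pow_lt; lra).
  assert (T5 : 0 <= 2*k^2*r^2*w/(D^2*(b-O))).
  { apply Rlt_le, Rdiv_lt_0_compat; [|apply Rmult_lt_0_compat; lra]. 
    replace (2*k^2*r^2*w) with (2*(k^2*r^2)*w) by ring. apply Rmult_lt_0_compat; lra. }
  assert (T4 : k^2*r^2/D <= (k^2*r^2 - M^2)/D^2 + 1).
  { apply (Rmult_le_reg_r (D^2)); [nra|].
    replace (k^2*r^2/D * D^2) with (k^2*r^2*D) by (field; lra).
    replace (((k^2*r^2 - M^2)/D^2 + 1) * D^2) with (k^2*r^2 - M^2 + D^2) by (field; lra).
    assert (HDe : D = M^2 + k^2*r^2) by reflexivity.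
    rewrite HDe. nra. }
  assert (T2e : 2*d*k^2*r^3*psi/D^2 = (2*k^2*r^3/D^2) * (d*psi)) by (field; lra).
  destruct (Rle_or_lt r R0) as [H|H].
  - specialize (Hc1 H). fold D in Hc1.
    assert (g * (d*psi) <= 2*d*k^2*r^3*psi/D^2).
    { rewrite T2e. apply Rmult_le_compat_r; auto. nra. }
    assert (0 <= k^2*r^2/D) by (apply Rlt_le, Rdiv_lt_0_compat; nra).
    lra.
  - specialize (Hc2 (Rlt_le _ _ H)). fold D in Hc2.
    assert (T2 : 0 <= 2*d*k^2*r^3*psi/D^2) by (rewrite T2e; apply Rmult_le_pos; [apply Rlt_le, Rdiv_lt_0_compat; nra | nra]).
    assert (g * (d*psi) <= g * psi) by (apply Rmult_le_compat_l; [lra|]; nra).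
    assert (g * psi <= k^2*r^2/D).
    { unfold psi. apply (Rmult_le_reg_r (r*(b-O))); [nra|].
      replace (g * ((2 * O - w) / (r * (b - O))) * (r * (b - O))) with (g*(2*O - w)) by (field; nra).
      replace (k ^ 2 * r ^ 2 / D * (r * (b - O))) with (k^2*r^3*(b-O)/D) by (field; lra).
      exact Hc2. }
    lra.
Qed.

Lemma alg (r O w wd u d k M b : R) :
  r <> 0 -> b - O <> 0 -> w - 2*O <> 0 -> M <> 0 -> M^2 + k^2*r^2 <> 0 ->
  let D := M^2 + k^2*r^2 in
  let Op := (w - 2*O)/r in
  let A := r^2/D in
  let Ap := 2*r*M^2/D^2 in
  let psi := (2*O - w)/(r*(b-O)) in
  let psip := ((2*Op - wd)*r*(b-O) - (2*O-w)*((b-O) - r*Op))/(r*(b-O))^2 in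
  let fluxd := Ap*u*(d*psi + /r) + A*(u*d*psi)*(d*psi + /r) + A*u*(d*psip - /r^2) in
  let Jy := 2*O*w / Op^2 in
  - fluxd + (1 - k^2/M^2*(A*(2*O*w)/(O-b)^2) + r/(O-b)*((wd*D - w*(2*k^2*r))/D^2)) * u
  = u * (A*(d*(1-d) - k^2/M^2*Jy)*psi^2 + 2*d*k^2*r^3*psi/D^2 + r*(d-1)*wd/(D*(b-O))
         + ((k^2*r^2 - M^2)/D^2 + 1) + 2*k^2*r^2*w/(D^2*(b-O))).
Proof. intros H1 H2 H3 H4 H5 D Op A Ap psi psip fluxd Jy. subst D Op A Ap psi psip fluxd Jy. field.
  repeat split; auto. replace (M^2+(k*r)^2) with (M^2+k^2*r^2) by ring; auto. intro; apply H2; lra.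
Qed.

Lemma WD_deriv W Wd k M y :
  (forall r, 0 < r -> derivable_pt_lim W r (Wd r)) -> 0 < y -> 0 < M ->
  Deriv (fun s => W s / (M^2 + k^2*s^2)) y =
    (Wd y*(M^2+k^2*y^2) - W y*(2*k^2*y))/(M^2+k^2*y^2)^2.
Proof.
  intros H1 Hy HM. apply Deriv_eq. apply is_derive_Reals.
  assert (HW : is_derive W y (Wd y)) by (apply is_derive_Reals; apply H1; lra).
  assert (0 < M^2 + (k*y)^2) by (apply Rplus_lt_le_0_compat; [apply pow_lt; lra| apply pow2_ge_0]).
  auto_derive.
  - split. exists (Wd y); exact HW. split; auto. lra.
  - replace (Derive (fun x => W x) y) with (Wd y)
        by (symmetry; apply is_derive_unique; exact HW).
    field. replace (M^2+(k*y)^2) with (M^2+k^2*y^2) in * by ring. lra.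
Qed.

Lemma Lop_eq W Wd M k b U r d :
  r <> 0 -> b - Omega W r <> 0 -> W r - 2*Omega W r <> 0 -> M <> 0 -> M^2+k^2*r^2 <> 0 ->
  Deriv (flux M k U) r = fluxd r (Omega W r) (W r) (Wd r) (U r) d k M b ->
  Deriv (fun s => W s / (M^2+k^2*s^2)) r = (Wd r*(M^2+k^2*r^2) - W r*(2*k^2*r))/(M^2+k^2*r^2)^2 ->
  let O := Omega W r in let w := W r in let wd := Wd r in
  let D := M^2 + k^2*r^2 in
  let Op := (w - 2*O)/r in
  let A := r^2/D in
  let psi := (2*O - w)/(r*(b-O)) in
  let Jy := 2*O*w / Op^2 in
  Lop W M k b U r = U r * (A*(d*(1-d) - k^2/M^2*Jy)*psi^2 + 2*d*k^2*r^3*psi/D^2 + r*(d-1)*wd/(D*(b-O))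
         + ((k^2*r^2 - M^2)/D^2 + 1) + 2*k^2*r^2*w/(D^2*(b-O))).
Proof.
  intros H1 H2 H3 H4 H5 H6 H7 O w wd D Op A psi Jy.
  unfold Lop, Bcoef, Acoef, Phi. rewrite H6, H7. unfold fluxd.
  exact (alg r (Omega W r) (W r) (Wd r) (U r) d k M b H1 H2 H3 H4 H5).
Qed.

Lemma cube_ratio_mono M k a x : 0 < a -> a <= x -> 0 < M ->
  a^3/(M^2+k^2*a^2) <= x^3/(M^2+k^2*x^2).
Proof.
  intros Ha Hax HM.
  assert (Da : 0 < M^2+k^2*a^2) by nra. assert (Dx : 0 < M^2+k^2*x^2) by nra.
  apply Rminus_le. 
  replace (a ^ 3 / (M ^ 2 + k ^ 2 * a ^ 2) - x ^ 3 / (M ^ 2 + k ^ 2 * x ^ 2))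
    with (- ((M^2*(x^3 - a^3) + k^2*(a^2*x^2*(x-a))) / ((M^2+k^2*a^2)*(M^2+k^2*x^2)))) by (field; lra).
  assert (0 <= (M^2*(x^3 - a^3) + k^2*(a^2*x^2*(x-a))) / ((M^2+k^2*a^2)*(M^2+k^2*x^2))).
  { unfold Rdiv. apply Rmult_le_pos; [| apply Rlt_le, Rinv_0_lt_compat; nra].
    assert (a^3 <= x^3) by (apply pow_incr; lra).
    apply Rplus_le_le_0_compat; apply Rmult_le_pos; try nra.
    apply Rmult_le_pos; [|lra]. apply Rmult_le_pos; apply pow2_ge_0. }
  lra.
Qed.

Theorem lemma4p4 (W : R -> R) (m : nat) (k b rbar : R) :
  classW W -> (1 <= m)%nat -> 0 < k -> 0 < b < 1 -> 0 < rbar ->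
  Omega W rbar = b ->
  J W rbar < (INR m) ^ 2 / (4 * k ^ 2) ->
  exists gamma, 0 < gamma /\
    forall sgn, (sgn = 1 \/ sgn = -1) ->
      let U := Ufun W b (dpm W (INR m) k rbar sgn) in
      forall r, rbar < r ->
        (exists l, derivable_pt_lim U r l) /\
        (exists l, derivable_pt_lim (flux (INR m) k U) r l) /\
        gamma * Deriv U r <= Lop W (INR m) k b U r /\
        0 < gamma * Deriv U r.
Proof.
  intros HW Hm Hk Hb Hr HOr HJ.
  destruct HW as [[Wd [HWd [Hq [_ [HWd0 HWdn]]]]] [Hpos [_ [HJd [_ HW0]]]]].
  set (M := INR m) in *.
  assert (HM : 1 <= M) by (unfold M; apply (le_INR 1); auto).
  assert (H2O : forall x, 0 < x -> W x < 2 * Omega W x) by (apply (two_Omega_gt W Wd); auto).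
  assert (HOd : forall x, 0 < x -> is_derive (Omega W) x ((W x - 2*Omega W x)/x))
    by (apply (Omega_deriv W Wd); auto).
  assert (HDO : forall x, 0 < x -> Deriv (Omega W) x = (W x - 2*Omega W x)/x)
    by (intros; apply Deriv_eq, is_derive_Reals; auto).
  assert (Hdec : forall x y, 0 < x -> x < y -> Omega W y < Omega W x).
  { intros x y Hx Hxy.
    destruct (MVT_cor2 (Omega W) (fun z => (W z - 2*Omega W z)/z) x y Hxy) as [c [Hc1 Hc2]].
    - intros c Hc; apply is_derive_Reals, HOd; lra.
    - assert (W c < 2 * Omega W c) by (apply H2O; lra).
      assert (0 < /c) by (apply Rinv_0_lt_compat; lra).
      assert ((W c - 2*Omega W c)/c < 0) by (unfold Rdiv; nra). nra. }
  assert (Hbz : forall z, rbar < z -> Omega W z < b) by (intros; rewrite <- HOr; apply Hdec; lra).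
  assert (HJform : forall x, 0 < x -> J W x = 2*Omega W x * W x / ((W x - 2*Omega W x)/x)^2)
    by (intros; unfold J, Phi; rewrite HDO; auto).
  assert (HJmono : forall y, rbar < y -> J W y <= J W rbar).
  { intros y Hy. destruct (MVT_cor2 (J W) (Deriv (J W)) rbar y Hy) as [c [Hc1 Hc2]].
    - intros c Hc. apply Deriv_spec. apply Rlt_not_eq, HJd; lra.
    - assert (Deriv (J W) c < 0) by (apply HJd; lra). nra. }
  assert (HJpos : 0 < J W rbar).
  { rewrite HJform by auto. apply Rdiv_lt_0_compat.
    - assert (0 < W rbar) by (apply Hpos; lra). rewrite HOr. nra.
    - assert (W rbar < 2 * Omega W rbar) by (apply H2O; lra).
      assert ((W rbar - 2*Omega W rbar)/rbar <> 0).
      { unfold Rdiv. apply Rmult_integral_contrapositive; split; [lra|].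
        apply Rinv_neq_0_compat; lra. }
      assert (HH := Rsqr_pos_lt _ H0). unfold Rsqr in HH. nra. }
  set (c0 := k^2/M^2 * J W rbar).
  assert (HM2 : 0 < M^2) by nra.
  assert (Hk2 : 0 < k^2) by nra.
  assert (Hc0 : 0 < c0 < /4).
  { unfold c0. split.
    - apply Rmult_lt_0_compat; [apply Rdiv_lt_0_compat|]; lra.
    - replace (/4) with (k^2/M^2 * (M^2/(4*k^2))) by (field; lra).
      apply Rmult_lt_compat_l; [apply Rdiv_lt_0_compat; lra|]. exact HJ. }
  set (sq := sqrt (/4 - c0)).
  assert (Hsq2 : sq * sq = /4 - c0) by (apply sqrt_sqrt; lra).
  assert (Hsq0 : 0 <= sq) by apply sqrt_pos.
  assert (Hsq : sq < /2) by nra.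
  set (R0 := rbar + 1).
  set (phi0 := b - Omega W R0).
  assert (Hphi0 : 0 < phi0) by (unfold phi0, R0; assert (Omega W (rbar+1) < b) by (apply Hbz; lra); lra).
  set (g := Rmin (2*k^2*rbar^3/(M^2+k^2*R0^2)^2) (k^2*R0^3*phi0/(2*b*(M^2+k^2*R0^2)))).
  assert (HR0 : 0 < R0) by (unfold R0; lra).
  assert (HDR0 : 0 < M^2+k^2*R0^2) by nra.
  assert (Hg : 0 < g).
  { apply Rmin_pos; apply Rdiv_lt_0_compat.
    - assert (0 < rbar^3) by (apply pow_lt; lra). nra.
    - apply pow_lt; lra.
    - assert (0 < R0^3) by (apply pow_lt; lra).
      apply Rmult_lt_0_compat; [|lra]. nra.
    - nra. }
  exists g. split; [exact Hg|].
  intros sgn Hsgn U r Hrr.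
  set (d := dpm W M k rbar sgn) in *.
  assert (Hd : 0 < d < 1 /\ d*(1-d) = c0).
  { unfold d, dpm. fold c0. fold sq. destruct Hsgn as [->| ->]; split; try split; nra. }
  destruct Hd as [Hd Hdd].
  assert (Hr0 : 0 < r) by lra.
  assert (HMp : 0 < M) by lra.
  assert (HU := U_deriv W Wd b d r HWd Hq HWd0 Hr0 (Hbz r Hrr)).
  assert (HF := flux_deriv W Wd b d k M rbar r HWd Hq HWd0 Hr HMp Hk Hbz
                 (fun z Hz => H2O z ltac:(lra)) Hrr).
  assert (HDU : Deriv U r = U r * (d * ((2*Omega W r - W r)/(r*(b - Omega W r)))))
    by (apply Deriv_eq, is_derive_Reals; exact HU).
  assert (HDF : Deriv (flux M k U) r = fluxd r (Omega W r) (W r) (Wd r) (U r) d k M b)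
    by (apply Deriv_eq, is_derive_Reals; exact HF).
  assert (HDB := WD_deriv W Wd k M r HWd Hr0 HMp).
  assert (HbO : 0 < b - Omega W r) by (assert (H := Hbz r Hrr); lra).
  assert (HwO : W r < 2 * Omega W r) by (apply H2O; lra).
  assert (Hw : 0 < W r) by (apply Hpos; lra).
  assert (HDr : 0 < M^2 + k^2*r^2) by nra.
  assert (HL := Lop_eq W Wd M k b U r d ltac:(lra) ltac:(lra) ltac:(lra) ltac:(lra) ltac:(lra) HDF HDB).
  assert (Hu : 0 < U r) by (unfold U, Ufun, Rpower; apply exp_pos).
  assert (Hpsi : 0 < (2*Omega W r - W r)/(r*(b - Omega W r))) by (apply Rdiv_lt_0_compat; nra).
  split; [exists (U r * (d * ((2*Omega W r - W r)/(r*(b - Omega W r))))); apply is_derive_Reals; exact HU|].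
  split; [eexists; apply is_derive_Reals; exact HF|].
  rewrite HDU, HL.
  split.
  - apply Rle_trans with (U r * (g*(d*((2*Omega W r - W r)/(r*(b - Omega W r))))));
      [right; ring|].
    apply Rmult_le_compat_l; [lra|].
    assert (Hin := ineq r (Omega W r) (W r) (Wd r) d k M b
                 (2*Omega W r*W r/((W r - 2*Omega W r)/r)^2) (J W rbar) R0 g
                 Hr0 HM Hk HbO ltac:(lra) Hw (HWdn r Hr0) Hd Hdd).
    apply Hin.
    + rewrite <- HJform by lra. apply HJmono; lra.
    + exact Hg.
    + intro HrR0. apply Rle_trans with (2*k^2*rbar^3/(M^2+k^2*R0^2)^2); [apply Rmin_l|].
      unfold Rdiv. apply Rmult_le_compat.
      * assert (0 < rbar^3) by (apply pow_lt; lra). nra.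
      * apply Rlt_le, Rinv_0_lt_compat, pow_lt; lra.
      * assert (rbar^3 <= r^3) by (apply pow_incr; lra). nra.
      * apply Rinv_le_contravar; [apply pow_lt; lra|]. apply pow_incr. split; [lra|]. apply Rplus_le_compat_l, Rmult_le_compat_l; [lra|]. apply pow_incr; lra.
    + intro HR0r.
      assert (Hphi : phi0 <= b - Omega W r).
      { unfold phi0. destruct (Rle_lt_or_eq_dec _ _ HR0r) as [Hl|He].
        - assert (Omega W r < Omega W R0) by (apply Hdec; lra). lra.
        - rewrite He; lra. }
      assert (Hcr := cube_ratio_mono M k R0 r HR0 HR0r HMp).
      assert (Hg2 : g <= k^2*R0^3*phi0/(2*b*(M^2+k^2*R0^2))) by apply Rmin_r.
      apply Rle_trans with (g * (2*b)); [apply Rmult_le_compat_l; lra|].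
      apply Rle_trans with (k^2*phi0*(R0^3/(M^2+k^2*R0^2))).
      * replace (k^2*phi0*(R0^3/(M^2+k^2*R0^2))) with
          (k^2*R0^3*phi0/(2*b*(M^2+k^2*R0^2)) * (2*b)) by (field; lra).
        apply Rmult_le_compat_r; lra.
      * replace (k^2*r^3*(b - Omega W r)/(M^2+k^2*r^2)) with
          (k^2*(b - Omega W r)*(r^3/(M^2+k^2*r^2))) by (field; lra).
        assert (0 <= R0^3/(M^2+k^2*R0^2)) by (apply Rlt_le, Rdiv_lt_0_compat; [apply pow_lt|]; lra).
        apply Rmult_le_compat; nra.
  - apply Rmult_lt_0_compat; [exact Hg|]. apply Rmult_lt_0_compat; [exact Hu|].
    apply Rmult_lt_0_compat; lra.
Qed.
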